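(* Let $G$ be a group with a conjugation-closed generating set $X$, let $g\in\mathrm{Mon}(X)$ with $n=\ell(g)$, and let $\mathbf x\in\mathrm{Fact}(G,g,\mathbf I)$. Then the map $L$ restricts to a poset isomorphism from the lower set ${\downarrow}(\mathbf x)=\{\mathbf y\in\mathrm{Fact}(G,g,\mathbf I):\mathbf y\le\mathbf x\}$ onto the lower set ${\downarrow}(L(\mathbf x))$ in $\mathrm{Comp}(\mathbb Z,n,\mathbf I)$.
   Context: $\mathrm{Mon}(X)$ is the generated submonoid; $\ell(x)$ is the minimal length of a product of elements of $X$ equal to $x$. A linear factorization of $g$ is a row vector $[x_L\ x_1\ \cdots\ x_k\ x_R]$ ($k\ge0$) of elements of $\mathrm{Mon}(X)$ with $x_1,\dots,x_k\ne1$ ($x_L,x_R$ may be trivial), $\ell(x_L)+\sum\ell(x_i)+\ell(x_R)=\ell(g)$, $x_Lx_1\cdots x_kx_R=g$. With $x_0=x_L$, $x_{k+1}=x_R$, the merge at position $i\in\{0,\dots,k\}$ replaces consecutive entries $x_i,x_{i+1}$ by the single entry $x_ix_{i+1}$. $\mathrm{Fact}(G,g,\mathbf I)$ is the set of linear factorizations ordered by $\mathbf y\le\mathbf x$ iff $\mathbf y$ is obtained from $\mathbf x$ by a finite sequence of merges. For $G=\mathbb Z$, $X=\{1\}$ (additive notation), these are linear compositions of $n$, forming $\mathrm{Comp}(\mathbb Z,n,\mathbf I)$. $L([x_L\ x_1\cdots x_k\ x_R])=[\ell(x_L)\ \ell(x_1)\cdots\ell(x_k)\ \ell(x_R)]$.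 *)

(* Defs.v *)
From mathcomp Require Import all_boot all_order all_algebra.
From Stdlib Require Import ClassicalEpsilon Relation_Operators.
Set Implicit Arguments. Unset Strict Implicit. Unset Printing Implicit Defensive.
Import GRing.Theory Num.Theory.

Section Generic.
Variables (G : Type) (mul : G -> G -> G) (one : G) (inv : G -> G).

Definition is_group : Prop :=
  [/\ (forall a b c, mul a (mul b c) = mul (mul a b) c),
      (forall a, mul one a = a), (forall a, mul a one = a),
      (forall a, mul (inv a) a = one) & (forall a, mul a (inv a) = one)].

(* X generates G as a group: every element is a product of elements of X
   and their inverses (the bool flags an inverse) *)
Definition generates (X : G -> Prop) : Prop :=
  forall h, exists s : seq (bool * G),
    List.Forall (fun p => X p.2) s /\
    foldr (fun p acc => mul (if p.1 then inv p.2 else p.2) acc) one s = h.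

Definition conj_closed (X : G -> Prop) : Prop :=
  forall x h, X x -> X (mul (mul (inv h) x) h).

Definition prodw (s : seq G) : G := foldr mul one s.

Definition in_mon (X : G -> Prop) (x : G) : Prop :=
  exists s, List.Forall X s /\ prodw s = x.

Definition is_ell (X : G -> Prop) (x : G) (n : nat) : Prop :=
  (exists s, [/\ List.Forall X s, prodw s = x & size s = n]) /\
  (forall s, List.Forall X s -> prodw s = x -> n <= size s).

(* ell(x) (meaningful for x in Mon(X)) *)
Definition ell (X : G -> Prop) (x : G) : nat :=
  epsilon (inhabits 0%N) (is_ell X x).

(* linear factorization [x_L x_1 ... x_k x_R] of g, as a sequence of
   length k+2 *)
Definition is_lin_fact (X : G -> Prop) (g : G) (s : seq G) : Prop :=
  [/\ 2 <= size s,
      List.Forall (in_mon X) s,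
      (forall i, 0 < i < (size s).-1 -> nth one s i <> one),
      sumn (map (ell X) s) = ell X g
    & prodw s = g].

Definition merge (i : nat) (s : seq G) : seq G :=
  take i s ++ (match drop i s with
               | a :: b :: r => mul a b :: r
               | r => r end).

Definition merge_step (y x : seq G) : Prop :=
  exists i, i.+2 <= size x /\ y = merge i x.

Definition fact_le (y x : seq G) : Prop :=
  clos_refl_trans (seq G) merge_step y x.

Definition down_fact (X : G -> Prop) (g : G) (x y : seq G) : Prop :=
  is_lin_fact X g y /\ fact_le y x.

End Generic.

Definition Xint : int -> Prop := fun a => a = 1%R.

Definition is_comp (n : nat) (c : seq int) : Prop :=
  is_lin_fact (fun a b : int => (a + b)%R) 0%R Xint (Posz n) c.

Definition comp_le (c d : seq int) : Prop :=
  fact_le (fun a b : int => (a + b)%R) c d.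

Definition down_comp (n : nat) (d c : seq int) : Prop :=
  is_comp n c /\ comp_le c d.

Definition Lmap (G : Type) (mul : G -> G -> G) (one : G) (X : G -> Prop)
  (s : seq G) : seq int :=
  map (fun a => Posz (ell mul one X a)) s.

(* Main.v *)
Require Import Defs.
From mathcomp Require Import all_boot all_order all_algebra.
From mathcomp Require Import zify.
From Stdlib Require Import ClassicalEpsilon Classical Relation_Operators Operators_Properties.
Set Implicit Arguments. Unset Strict Implicit. Unset Printing Implicit Defensive.
Import GRing.Theory Num.Theory.

Definition blocks (p : seq nat) (n : nat) := all (fun k => 0 < k) p && (sumn p == n).

Lemma merge_cons (T : Type) (f : T -> T -> T) i a r :
  Defs.merge f i.+1 (a :: r) = a :: Defs.merge f i r.
Proof. by []. Qed.

Lemma merge0 (T : Type) (f : T -> T -> T) a b r :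
  Defs.merge f 0 [:: a, b & r] = f a b :: r.
Proof. by []. Qed.

Arguments Defs.merge : simpl never.

Lemma merge_sumn i p : sumn (Defs.merge addn i p) = sumn p.
Proof.
elim: i p => [|i IH] [|k p] //; first by case: p => [|k2 p] //; rewrite merge0 /= addnA.
by rewrite merge_cons /= IH.
Qed.

Lemma merge_pos i p : all (fun k => 0 < k) p -> all (fun k => 0 < k) (Defs.merge addn i p).
Proof.
elim: i p => [|i IH] [|k p] //.
  by case: p => [|k2 p] //; rewrite merge0 /= => /and3P [H1 H2 H3]; rewrite H3 addn_gt0 H1.
move=> /andP [H1 H2]; rewrite merge_cons /= H1 /=; exact: IH.
Qed.

Lemma blocks_merge i p n : blocks p n -> blocks (Defs.merge addn i p) n.
Proof. by move=> /andP [H1 H2]; rewrite /blocks merge_pos // merge_sumn. Qed.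

Section Mon.
Variables (T : Type) (mul : T -> T -> T) (one : T).
Hypothesis mulA : forall a b c, mul a (mul b c) = mul (mul a b) c.
Hypothesis mul1l : forall a, mul one a = a.
Hypothesis mul1r : forall a, mul a one = a.
Local Notation pw := (prodw mul one).

Fixpoint co (p : seq nat) (s : seq T) : seq T :=
  if p is k :: p' then pw (take k s) :: co p' (drop k s) else [::].

Lemma prodw_cons a l : pw (a :: l) = mul a (pw l).
Proof. by []. Qed.

Lemma prodw_cat s1 s2 : pw (s1 ++ s2) = mul (pw s1) (pw s2).
Proof. rewrite /prodw; elim: s1 => [|a s IH] /=; [by rewrite mul1l | by rewrite IH mulA]. Qed.

Lemma size_co p s : size (co p s) = size p.
Proof. by elim: p s => [|k p IH] s //=; rewrite IH. Qed.

Lemma co_ones s : co (nseq (size s) 1) s = s.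
Proof. elim: s => [|a s IH] //=; by rewrite take0 drop0 IH /prodw /= mul1r. Qed.

Lemma merge_co i p s : i.+2 <= size p ->
  Defs.merge mul i (co p s) = co (Defs.merge addn i p) s.
Proof.
elim: i p s => [|i IH] [|k [|k2 p]] s // H.
  by rewrite /= merge0 takeD prodw_cat drop_drop [k2 + k]addnC.
rewrite merge_cons.
change (Defs.merge mul i.+1 (pw (take k s) :: co (k2 :: p) (drop k s)) =
  pw (take k s) :: co (Defs.merge addn i (k2 :: p)) (drop k s)).
by rewrite merge_cons -IH.
Qed.

Lemma prodw_co p s : pw (co p s) = pw (take (sumn p) s).
Proof.
elim: p s => [|k p IH] s; first by rewrite /= take0.
rewrite -[co (k :: p) s]/(pw (take k s) :: co p (drop k s)) -[sumn (k :: p)]/(k + sumn p).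
by rewrite prodw_cons IH -prodw_cat -takeD.
Qed.

Lemma fact_le_co y x : fact_le mul y x -> exists p, blocks p (size x) /\ y = co p x.
Proof.
move=> Hc; have {Hc} := clos_rt_rt1n _ _ _ _ Hc; elim => [x0 | y0 w x0 [i [Hi ->]] _ [p [Hp Hw]]].
  exists (nseq (size x0) 1); rewrite co_ones; split=> //.
  rewrite /blocks; apply/andP; split; first by apply/allP => k /nseqP [->].
  by elim: (size x0) => //= m /eqP ->.
exists (Defs.merge addn i p); split; first exact: blocks_merge.
rewrite Hw; apply: merge_co; by rewrite Hw size_co in Hi.
Qed.

Lemma fact_le_cons a y x : fact_le mul y x -> fact_le mul (a :: y) (a :: x).
Proof.
elim => [y0 x0 [i [Hi ->]] | x0 | y0 w x0 _ H1 _ H2].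
- apply: rt_step; exists i.+1; split => //.
- exact: rt_refl.
- exact: rt_trans H1 H2.
Qed.

Lemma fact_le_block t r : 0 < size t -> fact_le mul (pw t :: r) (t ++ r).
Proof.
case: t => [//|a t _]; elim: t a => [|b t IH] a.
  by rewrite /prodw /= mul1r; apply: rt_refl.
have -> : pw [:: a, b & t] = pw (mul a b :: t) by rewrite !prodw_cons mulA.
eapply rt_trans; first exact: (IH (mul a b)).
by apply: rt_step; exists 0; split.
Qed.

Lemma co_le p s : blocks p (size s) -> fact_le mul (co p s) s.
Proof.
elim: p s => [|k p IH] s.
  by rewrite /blocks; case: s => // _; apply: rt_refl.
rewrite /blocks => /andP [/andP [Hk Hp] /eqP Hs].
rewrite -[sumn (k :: p)]/(k + sumn p) in Hs.
apply: (rt_trans _ _ _ (pw (take k s) :: drop k s)).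
  apply: fact_le_cons; apply: IH; rewrite /blocks size_drop; apply/andP; split; first exact: Hp.
  apply/eqP; lia.
have := @fact_le_block (take k s) (drop k s); rewrite cat_take_drop; apply.
by rewrite size_take; case: ifP => _; lia.
Qed.
End Mon.

Lemma Forall_cons' (A : Type) (P : A -> Prop) a s :
  List.Forall P (a :: s) -> P a /\ List.Forall P s.
Proof. by move=> H; inversion H. Qed.

Lemma Forall_take (A : Type) (P : A -> Prop) k s :
  List.Forall P s -> List.Forall P (take k s).
Proof. by rewrite -{1}(cat_take_drop k s) => /List.Forall_app []. Qed.

Lemma Forall_drop (A : Type) (P : A -> Prop) k s :
  List.Forall P s -> List.Forall P (drop k s).
Proof. by rewrite -{1}(cat_take_drop k s) => /List.Forall_app []. Qed.

Lemma Forall_nth (A : Type) (P : A -> Prop) d s i :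
  List.Forall P s -> i < size s -> P (nth d s i).
Proof.
elim: s i => [|a s IH] i H Hi //.
case: (Forall_cons' H) => Ha Hs; case: i Hi => [|i] Hi //=; exact: IH.
Qed.

Lemma all2_sumn a b : all2 leq a b -> sumn a <= sumn b.
Proof.
elim: a b => [|x a IH] [|y b] //= /andP [H1 H2]; rewrite leq_add //; exact: IH.
Qed.

Lemma all2_eq a b : all2 leq a b -> sumn b <= sumn a -> a = b.
Proof.
elim: a b => [|x a IH] [|y b] //= /andP [H1 H2] H3.
have H4 := all2_sumn H2.
have Exy : x = y by lia.
by rewrite Exy (IH b H2) //; lia.
Qed.

Section Ell.
Variables (T : Type) (mul : T -> T -> T) (one : T) (X : T -> Prop).
Local Notation pw := (prodw mul one).
Local Notation el := (ell mul one X).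
Local Notation inm := (in_mon mul one X).

Lemma ell_exists a : inm a -> exists m, is_ell mul one X a m.
Proof.
move=> [s [Hs Hp]].
suff H : forall n s, size s <= n -> List.Forall X s -> pw s = a ->
   exists m, is_ell mul one X a m by exact: (H _ s (leqnn _) Hs Hp).
clear Hs Hp s; elim=> [|n IH] s Hsz HX Hpa.
  exists 0; split; last by [].
  by exists s; split => //; apply/eqP; rewrite -leqn0.
case: (classic (forall s', List.Forall X s' -> pw s' = a -> size s <= size s')) => H.
  by exists (size s); split => //; exists s.
have [s' [H1 [H2 H3]]] : exists s', List.Forall X s' /\ pw s' = a /\ size s' < size s.
  apply: NNPP => Hn; apply: H => s' H1 H2; rewrite leqNgt; apply/negP => H3.
  by apply: Hn; exists s'.
apply: (IH s') => //; lia.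
Qed.

Lemma ell_spec a : inm a -> is_ell mul one X a (el a).
Proof. by move=> /ell_exists H; rewrite /ell; apply: epsilon_spec. Qed.

Lemma is_ell_uniq a m m' : is_ell mul one X a m -> is_ell mul one X a m' -> m = m'.
Proof.
move=> [[s [Hs1 Hs2 Hs3]] Hm] [[s' [H1 H2 H3]] Hm'].
have := Hm s' H1 H2; have := Hm' s Hs1 Hs2; lia.
Qed.

Lemma ell_eq a m : is_ell mul one X a m -> el a = m.
Proof.
move=> H; apply: is_ell_uniq (H); apply: ell_spec.
by case: H => [[s [H1 H2 _]] _]; exists s.
Qed.

Lemma ell_one : el one = 0.
Proof. by apply: ell_eq; split; [exists [::] | by []]. Qed.

Lemma ell0 a : inm a -> el a = 0 -> a = one.
Proof.
move=> /ell_spec [[s [_ Hp Hsz]] _] H0; rewrite H0 in Hsz.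
by case: s Hp Hsz => // Hp _; rewrite -Hp.
Qed.

Hypothesis mulA : forall a b c, mul a (mul b c) = mul (mul a b) c.
Hypothesis mul1l : forall a, mul one a = a.
Hypothesis mul1r : forall a, mul a one = a.

Lemma mon_mul a b : inm a -> inm b -> inm (mul a b) /\ el (mul a b) <= el a + el b.
Proof.
move=> /ell_spec [[sa [Ha1 Ha2 Ha3]] _] /ell_spec [[sb [Hb1 Hb2 Hb3]] _].
have Hm : inm (mul a b).
  by exists (sa ++ sb); split; [apply/List.Forall_app | rewrite (prodw_cat mulA mul1l) Ha2 Hb2].
split => //; have [_ Hmin] := ell_spec Hm.
rewrite -Ha3 -Hb3 -size_cat; apply: Hmin; first by apply/List.Forall_app.
by rewrite (prodw_cat mulA mul1l) Ha2 Hb2.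
Qed.

Lemma mon_prodw s : List.Forall inm s -> inm (pw s) /\ el (pw s) <= sumn (map el s).
Proof.
elim: s => [|a s IH] H.
  by change (pw [::]) with one; rewrite ell_one; split => //; exists [::].
case: (Forall_cons' H) => Ha Hs.
have [Hm Hl] := IH Hs; have [Hm' Hl'] := mon_mul Ha Hm.
rewrite prodw_cons; split => //.
change (sumn (map el (a :: s))) with (el a + sumn (map el s)).
apply: leq_trans Hl' _; by rewrite leq_add2l.
Qed.

Lemma Forall_co p s : List.Forall inm s -> List.Forall inm (co mul one p s).
Proof.
elim: p s => [|k p IH] s H; first by constructor.
constructor; [exact: (mon_prodw (Forall_take k H)).1 | exact: IH (Forall_drop k H)].
Qed.

Lemma co_ell_le p s : List.Forall inm s ->
  all2 leq (map el (co mul one p s)) (co addn 0 p (map el s)).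
Proof.
elim: p s => [|k p IH] s H //.
change (map el (co mul one (k :: p) s)) with
  (el (pw (take k s)) :: map el (co mul one p (drop k s))).
change (co addn 0 (k :: p) (map el s)) with
  (prodw addn 0 (take k (map el s)) :: co addn 0 p (drop k (map el s))).
apply/andP; split.
  rewrite -map_take; exact: (mon_prodw (Forall_take k H)).2.
rewrite -map_drop; exact: IH (Forall_drop k H).
Qed.

Lemma sumn_co l p : sumn (co addn 0 p l) = sumn (take (sumn p) l).
Proof. exact: (prodw_co addnA add0n). Qed.

Lemma L_co g x p : is_lin_fact mul one X g x -> sumn p = size x ->
  map el (co mul one p x) = co addn 0 p (map el x).
Proof.
move=> [_ Hm _ Hsum Hprod] Hp; apply: all2_eq; first exact: co_ell_le.
rewrite sumn_co Hp -(size_map el) take_size Hsum.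
have Hg : g = pw (co mul one p x) by rewrite (prodw_co mulA mul1l) Hp take_size.
rewrite {1}Hg; exact: (mon_prodw (Forall_co p Hm)).2.
Qed.

Lemma lift g x p : is_lin_fact mul one X g x -> blocks p (size x) -> 2 <= size p ->
  (forall i, 0 < i < (size p).-1 -> nth 0 (co addn 0 p (map el x)) i <> 0) ->
  is_lin_fact mul one X g (co mul one p x).
Proof.
move=> Hx Hb H2 Hint.
have Hp : sumn p = size x by case/andP: Hb => _ /eqP.
have Hx' := Hx; case: Hx' => [_ Hm _ Hsum Hprod].
split.
- by rewrite size_co.
- exact: Forall_co.
- rewrite size_co => i Hi Heq; apply: (Hint i Hi).
  rewrite -(L_co Hx Hp) (nth_map one); last by rewrite size_co; lia.
  by rewrite Heq ell_one.
- by rewrite (L_co Hx Hp) sumn_co Hp -(size_map el) take_size Hsum.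
- by rewrite (prodw_co mulA mul1l) Hp take_size.
Qed.
End Ell.

Local Notation addZ := (fun a b : int => (a + b)%R).

Lemma addZA : forall a b c : int, addZ a (addZ b c) = addZ (addZ a b) c.
Proof. by move=> a b c /=; rewrite addrA. Qed.
Lemma addZ0l : forall a : int, addZ 0%R a = a.
Proof. by move=> a /=; rewrite add0r. Qed.
Lemma addZ0r : forall a : int, addZ a 0%R = a.
Proof. by move=> a /=; rewrite addr0. Qed.

Lemma prodwZ l : prodw addZ 0%R (map Posz l) = Posz (sumn l).
Proof. rewrite /prodw; elim: l => //= a l IH; by rewrite IH PoszD. Qed.

Lemma coZ l p : co addZ 0%R p (map Posz l) = map Posz (co addn 0 p l).
Proof.
elim: p l => [|k p IH] l //.
change (prodw addZ 0%R (take k (map Posz l)) :: co addZ 0%R p (drop k (map Posz l)) =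
  Posz (prodw addn 0 (take k l)) :: map Posz (co addn 0 p (drop k l))).
by rewrite -map_take -map_drop prodwZ IH.
Qed.

Lemma prodw_ones s : List.Forall Xint s -> prodw addZ 0%R s = Posz (size s).
Proof.
elim: s => [|a s IH] H //; case: (Forall_cons' H) => Ha Hs.
rewrite prodw_cons IH // Ha /=.
by rewrite -[(size s).+1]add1n PoszD.
Qed.

Lemma Forall_nseq1 m : List.Forall Xint (nseq m 1%R).
Proof. by elim: m => [|m IH] /=; constructor. Qed.

Lemma ellZ m : ell addZ 0%R Xint (Posz m) = m.
Proof.
apply: ell_eq; split.
  exists (nseq m 1%R); split; [exact: Forall_nseq1 | | by rewrite size_nseq].
  by rewrite prodw_ones ?size_nseq //; exact: Forall_nseq1.
by move=> s Hs; rewrite prodw_ones // => [[->]].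
Qed.

Lemma Forall_Posz l : List.Forall (in_mon addZ 0%R Xint) (map Posz l).
Proof.
elim: l => [|a l IH] /=; constructor => //.
exists (nseq a 1%R); split; [exact: Forall_nseq1 | by rewrite prodw_ones ?size_nseq //; exact: Forall_nseq1].
Qed.

Lemma map_ellZ l : map (ell addZ 0%R Xint) (map Posz l) = l.
Proof. by elim: l => //= a l ->; rewrite ellZ. Qed.

Lemma map_Posz_inj a b : map Posz a = map Posz b -> a = b.
Proof. by elim: a b => [|x a IH] [|y b] //= [-> /IH ->]. Qed.

Lemma Lmap_eq (T : Type) (mul : T -> T -> T) one X s :
  Lmap mul one X s = map Posz (map (ell mul one X) s).
Proof. by elim: s => //= a s ->. Qed.

Lemma comp_of_fact (T : Type) (mul : T -> T -> T) one X g y :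
  is_lin_fact mul one X g y -> is_comp (ell mul one X g) (Lmap mul one X y).
Proof.
move=> [H2 Hm Hint Hsum Hp]; rewrite Lmap_eq; split.
- by rewrite !size_map.
- exact: Forall_Posz.
- move=> i; rewrite !size_map => Hi.
  rewrite (nth_map 0%N) ?size_map; last lia.
  rewrite (nth_map one); last lia.
  move=> [H0]; apply: (Hint i Hi); apply: ell0 H0; apply: Forall_nth Hm _; lia.
- by rewrite map_ellZ ellZ.
- by rewrite prodwZ Hsum.
Qed.

Lemma first_block (l : seq nat) k p k' q :
  (forall i, 0 < i < (size l).-1 -> 0 < nth 0 l i) -> 0 < k ->
  k + sumn p = size l -> k' + sumn q = size l -> all (fun k => 0 < k) q ->
  size p = size q -> k < k' -> sumn (take k l) = sumn (take k' l) -> False.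
Proof.
move=> Hint Hk Hp Hq Hqpos Hsz Hlt Hsum.
have Hz : nth 0 l k = 0.
  move: Hsum; rewrite -(subnKC (ltnW Hlt)) takeD sumn_cat => Hs.
  have : sumn (take (k' - k) (drop k l)) = 0 by lia.
  rewrite (drop_nth 0); last lia.
  case E: (k' - k) => [|m]; first lia.
  by rewrite /=; lia.
have Hk2 : ~~ (k < (size l).-1).
  by apply/negP => H; have := Hint k; rewrite Hk H Hz => /(_ isT).
have Hq0 : q = [::].
  case: q Hq Hqpos Hsz => [//|a q'] /= Hq /andP [Ha _] _; lia.
rewrite Hq0 /= in Hsz Hq; case: p Hp Hsz => [|a p'] //= Hp _; lia.
Qed.

Lemma coN_inj (l : seq nat) p q :
  (forall i, 0 < i < (size l).-1 -> 0 < nth 0 l i) ->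
  blocks p (size l) -> blocks q (size l) -> size p = size q ->
  co addn 0 p l = co addn 0 q l -> p = q.
Proof.
elim: p q l => [|k p IH] [|k' q] l Hint //.
rewrite /blocks => /andP [/andP [Hk Hp] /eqP Hs] /andP [/andP [Hk' Hq] /eqP Hs'] [Hsz] [Hsum Hco].
rewrite -[sumn (k :: p)]/(k + sumn p) in Hs.
rewrite -[sumn (k' :: q)]/(k' + sumn q) in Hs'.
have Ekk : k = k'.
  case: (ltngtP k k') => // H; exfalso.
    exact: (first_block Hint Hk Hs Hs' Hq Hsz H Hsum).
  exact: (first_block Hint Hk' Hs' Hs Hp (esym Hsz) H (esym Hsum)).
subst k'; congr (_ :: _); apply: (IH q (drop k l)) => //.
- move=> i; rewrite size_drop nth_drop => Hi; apply: Hint; lia.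
- rewrite /blocks size_drop; apply/andP; split; [exact: Hp | apply/eqP; lia].
- rewrite /blocks size_drop; apply/andP; split; [exact: Hq | apply/eqP; lia].
Qed.

Theorem lemma3p10 (G : Type) (mul : G -> G -> G) (one : G) (inv : G -> G)
  (X : G -> Prop) (g : G) (x : seq G) :
  is_group mul one inv -> generates mul one inv X -> conj_closed mul inv X ->
  in_mon mul one X g ->
  is_lin_fact mul one X g x ->
  let n := ell mul one X g in
  let L := Lmap mul one X in
  (* L maps the lower set of x into the lower set of L(x) *)
  (forall y, down_fact mul one X g x y -> down_comp n (L x) (L y)) /\
  (* injective on the lower set *)
  (forall y z, down_fact mul one X g x y -> down_fact mul one X g x z ->
     L y = L z -> y = z) /\
  (* onto the lower set of L(x) *)
  (forall c, down_comp n (L x) c -> exists y, down_fact mul one X g x y /\ L y = c) /\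
  (* order-preserving and order-reflecting *)
  (forall y z, down_fact mul one X g x y -> down_fact mul one X g x z ->
     (fact_le mul y z <-> comp_le (L y) (L z))).
Proof.
move=> [mulA mul1l mul1r _ _] _ _ _ Hx n L.
have F2 : forall z p, is_lin_fact mul one X g z -> blocks p (size z) ->
    L (co mul one p z) = co addZ 0%R p (L z).
  move=> z p Hz Hp; rewrite /L !Lmap_eq (L_co mulA mul1l Hz) ?coZ //.
  by case/andP: Hp => _ /eqP.
have sizeL : forall s, size (L s) = size s by move=> s; rewrite /L Lmap_eq !size_map.
have inj : forall y z, down_fact mul one X g x y -> down_fact mul one X g x z ->
     L y = L z -> y = z.
  move=> y z [Hy Hyx] [Hz Hzx].
  have [p [Hp Ey]] := fact_le_co mulA mul1l mul1r Hyx.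
  have [q [Hq Ez]] := fact_le_co mulA mul1l mul1r Hzx.
  move=> E; have Hs : size p = size q.
    by rewrite -(size_co mul one p x) -(size_co mul one q x) -Ey -Ez -!sizeL E.
  move: E; rewrite Ey Ez !F2 // /L !Lmap_eq !coZ => /map_Posz_inj E.
  have -> // : p = q.
  case: Hx => [_ Hm Hint _ _].
  apply: (coN_inj _ _ _ Hs E); rewrite ?size_map //.
  move=> i Hi; rewrite (nth_map one); last lia.
  rewrite lt0n; apply/eqP => H0; apply: (Hint i Hi).
  by apply: ell0 H0; apply: Forall_nth Hm _; lia.
have part1 : forall y, down_fact mul one X g x y -> down_comp n (L x) (L y).
  move=> y [Hy Hyx]; split; first exact: comp_of_fact Hy.
  have [p [Hp ->]] := fact_le_co mulA mul1l mul1r Hyx.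
  rewrite F2 //. apply: (co_le addZA addZ0r); by rewrite sizeL.
have liftc : forall z p, is_lin_fact mul one X g z -> blocks p (size z) ->
    is_comp n (co addZ 0%R p (L z)) -> is_lin_fact mul one X g (co mul one p z).
  move=> z p Hz Hp [Hc2 _ Hcint _ _].
  rewrite size_co in Hc2.
  apply: (lift mulA mul1l Hz Hp Hc2) => i Hi H0.
  apply: (Hcint i); first by rewrite size_co.
  rewrite /L Lmap_eq coZ (nth_map 0%N) ?H0 //.
  rewrite size_co; lia.
split; first exact: part1.
split; first exact: inj.
split.
  move=> c [Hc Hcx].
  have [p [Hp Ec]] := fact_le_co addZA addZ0l addZ0r Hcx.
  rewrite sizeL in Hp; rewrite Ec in Hc.
  exists (co mul one p x); split; last by rewrite F2.
  split; first exact: liftc.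
  exact: (co_le mulA mul1r Hp).
move=> y z Hy Hz; have [Hyf Hyx] := Hy; have [Hzf Hzx] := Hz; split.
  move=> Hyz; have [p [Hp ->]] := fact_le_co mulA mul1l mul1r Hyz.
  rewrite F2 //; apply: (co_le addZA addZ0r); by rewrite sizeL.
move=> Hyz; have [p [Hp Ey]] := fact_le_co addZA addZ0l addZ0r Hyz.
rewrite sizeL in Hp.
have Hc := (part1 y Hy).1; rewrite Ey in Hc.
have Hlf := liftc z p Hzf Hp Hc.
have Hle := co_le mulA mul1r Hp.
have E : co mul one p z = y.
  apply: inj; [split => //; exact: rt_trans Hle Hzx | exact: Hy | by rewrite F2].
by rewrite -E.
Qed.
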